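(* Let ${\sf Gr}^{\sf count}$ be the category of countable groups and ${\sf Gr}^{\sf f.g.}$ the category of finitely generated groups (both full subcategories of the category of groups). Any functor ${\sf Gr}^{\sf count}\to{\sf Gr}^{\sf f.g.}$ is isomorphic to a constant functor. *)

(* Defs.v *)
From Stdlib Require Import List.
Set Implicit Arguments.

Record Group : Type := MkGroup {
  carrier :> Type;
  gmul : carrier -> carrier -> carrier;
  gone : carrier;
  ginv : carrier -> carrier;
  gmulA : forall x y z, gmul x (gmul y z) = gmul (gmul x y) z;
  gmul1l : forall x, gmul gone x = x;
  gmul1r : forall x, gmul x gone = x;
  gmulVl : forall x, gmul (ginv x) x = gone;
  gmulVr : forall x, gmul x (ginv x) = gone
}.

Record Hom (G H : Group) : Type := MkHom {
  hfun :> G -> H;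
  hmul : forall x y, hfun (gmul G x y) = gmul H (hfun x) (hfun y)
}.

Definition hom_id (G : Group) : Hom G G :=
  @MkHom G G (fun x => x) (fun x y => eq_refl).

Definition hom_comp (G H K : Group) (g : Hom H K) (f : Hom G H) : Hom G K.
Proof.
  refine (@MkHom G K (fun x => g (f x)) _).
  intros x y; rewrite (hmul f), (hmul g); reflexivity.
Defined.

Definition is_iso (G H : Group) (f : Hom G H) : Prop :=
  exists g : Hom H G, (forall x, g (f x) = x) /\ (forall y, f (g y) = y).

Definition countable_group (G : Group) : Prop :=
  exists c : G -> nat, forall x y, c x = c y -> x = y.

Inductive generated (G : Group) (S : list (carrier G)) : carrier G -> Prop :=
  | gen_in : forall x, In x S -> generated G S x
  | gen_one : generated G S (gone G)
  | gen_inv : forall x, generated G S x -> generated G S (ginv G x)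
  | gen_mul : forall x y, generated G S x -> generated G S y ->
      generated G S (gmul G x y).

Definition finitely_generated (G : Group) : Prop :=
  exists S : list (carrier G), forall x, @generated G S x.

Record CountGroup : Type := MkCountGroup {
  cgroup :> Group;
  cgroup_countable : countable_group cgroup
}.

Record FGGroup : Type := MkFGGroup {
  fggroup :> Group;
  fggroup_fg : finitely_generated fggroup
}.

(* A functor Gr^count -> Gr^f.g.; equality of morphisms is equality of the
   underlying functions (stated pointwise). *)
Record Functor_count_fg : Type := MkFunctor {
  Fobj : CountGroup -> FGGroup;
  Fmor : forall G H : CountGroup, Hom G H -> Hom (Fobj G) (Fobj H);
  Fid : forall (G : CountGroup) x, Fmor G G (hom_id G) x = x;
  Fcomp : forall (G H K : CountGroup) (g : Hom H K) (f : Hom G H) x,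
      Fmor G K (hom_comp g f) x = Fmor H K g (Fmor G H f x)
}.

(* F is isomorphic to the constant functor with value K (all morphisms sent
   to id_K): a natural transformation eta : F => const_K whose components are
   isomorphisms. *)
Definition iso_to_constant (F : Functor_count_fg) (K : FGGroup) : Prop :=
  exists eta : forall G : CountGroup, Hom (Fobj F G) K,
    (forall G, is_iso (eta G)) /\
    (forall (G H : CountGroup) (f : Hom G H) x, eta H (Fmor F G H f x) = eta G x).

(* Main.v *)
Require Import Defs.
From Stdlib Require Import Cantor List PeanoNat.
From Stdlib Require Import Classical ClassicalDescription ProofIrrelevance FunctionalExtensionality IndefiniteDescription.
From mathcomp Require Import ssreflect ssrfun ssrbool eqtype ssrnat seq choice.
Set Implicit Arguments.

Lemma hom_ext (G H : Group) (f g : Hom G H) : (forall x, f x = g x) -> f = g.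
Proof.
  destruct f as [f fm], g as [g gm]; simpl; intro E.
  assert (f = g) by (apply functional_extensionality; exact E). subst g.
  f_equal. apply proof_irrelevance.
Qed.

Lemma mul_idem_one (G : Group) (x : G) : gmul G x x = x -> x = gone G.
Proof.
  intro H.
  have E : gmul G (ginv G x) (gmul G x x) = gmul G (ginv G x) x by rewrite H.
  rewrite gmulA gmulVl gmul1l in E. exact E.
Qed.

Lemma inv_unique (G : Group) (a b : G) : gmul G a b = gone G -> a = ginv G b.
Proof.
  intro H.
  have E : gmul G a (gmul G b (ginv G b)) = gmul G (gmul G a b) (ginv G b) by apply gmulA.
  rewrite gmulVr gmul1r H gmul1l in E. exact E.
Qed.

Lemma inv_one (G : Group) : ginv G (gone G) = gone G.
Proof. symmetry; apply inv_unique; apply gmul1l. Qed.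

Lemma hom_one (G H : Group) (f : Hom G H) : f (gone G) = gone H.
Proof. apply mul_idem_one. rewrite -hmul gmul1l. reflexivity. Qed.

Lemma hom_inv (G H : Group) (f : Hom G H) x : f (ginv G x) = ginv H (f x).
Proof. apply inv_unique. rewrite -hmul gmulVl. apply hom_one. Qed.

Lemma gen_agree (X Y : Group) (f g : Hom X Y) (S : list X) :
  (forall s, In s S -> f s = g s) -> forall x, generated X S x -> f x = g x.
Proof.
  intros HS x Hx; induction Hx.
  - auto.
  - rewrite !hom_one; reflexivity.
  - rewrite !hom_inv IHHx; reflexivity.
  - rewrite !hmul IHHx1 IHHx2; reflexivity.
Qed.

Section Fun.
Variable F : Functor_count_fg.

Lemma Fext (G H : CountGroup) (f g : Hom G H) y :
  (forall x, f x = g x) -> Fmor F G H f y = Fmor F G H g y.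
Proof. intro E; rewrite (@hom_ext _ _ f g E); reflexivity. Qed.

Lemma Fcomp' (G H K : CountGroup) (h : Hom G K) (g : Hom H K) (f : Hom G H) y :
  (forall x, h x = g (f x)) -> Fmor F G K h y = Fmor F H K g (Fmor F G H f y).
Proof. intro E. rewrite -Fcomp. apply Fext. exact E. Qed.

Lemma Fid' (G : CountGroup) (f : Hom G G) y :
  (forall x, f x = x) -> Fmor F G G f y = y.
Proof. intro E; rewrite (@Fext G G f (hom_id G) y); [apply Fid | exact E]. Qed.
End Fun.
Arguments Fcomp' {F G H K h g f y} _.
Arguments Fext {F G H f g y} _.

Definition triv (G H : Group) : Hom G H :=
  @MkHom G H (fun _ => gone H) (fun _ _ => Logic.eq_sym (gmul1l H (gone H))).

Definition Tgrp : Group.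
Proof.
  refine (@MkGroup unit (fun _ _ => tt) tt (fun _ => tt) _ _ _ _ _); intros;
  repeat match goal with u : unit |- _ => destruct u end; reflexivity.
Defined.

Definition TC : CountGroup.
Proof.
  refine (@MkCountGroup Tgrp _).
  exists (fun _ => 0). intros x y _. destruct x, y. reflexivity.
Defined.

Section DS.
Variable G : Group.

Definition fsupp (a : nat -> G) := exists L : list nat, forall n, ~ In n L -> a n = gone G.
Definition Acar := {a : nat -> G | fsupp a}.

Lemma Aext (a b : Acar) : (forall n, proj1_sig a n = proj1_sig b n) -> a = b.
Proof.
  destruct a as [a pa], b as [b pb]; simpl; intro E.
  assert (a = b) by (apply functional_extensionality; exact E). subst b.
  f_equal. apply proof_irrelevance.
Qed.

Lemma fsupp_mul a b : fsupp a -> fsupp b -> fsupp (fun n => gmul G (a n) (b n)).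
Proof.
  intros [L1 H1] [L2 H2]; exists (L1 ++ L2); intros n Hn.
  rewrite H1. rewrite H2. apply gmul1l.
  all: intro; apply Hn; apply in_or_app; auto.
Qed.

Lemma fsupp_one : fsupp (fun _ => gone G).
Proof. exists nil; auto. Qed.

Lemma fsupp_inv a : fsupp a -> fsupp (fun n => ginv G (a n)).
Proof. intros [L H]; exists L; intros n Hn; rewrite H //; apply inv_one. Qed.

Definition Amul (a b : Acar) : Acar :=
  exist _ _ (fsupp_mul (proj2_sig a) (proj2_sig b)).
Definition Aone : Acar := exist _ _ fsupp_one.
Definition Ainv (a : Acar) : Acar := exist _ _ (fsupp_inv (proj2_sig a)).

Definition Agroup : Group.
Proof.
  refine (@MkGroup Acar Amul Aone Ainv _ _ _ _ _); intros; apply Aext; intro n; simpl.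
  - apply gmulA.
  - apply gmul1l.
  - apply gmul1r.
  - apply gmulVl.
  - apply gmulVr.
Defined.

Definition suppL (a : Acar) : list nat :=
  proj1_sig (constructive_indefinite_description _ (proj2_sig a)).
Lemma suppL_spec (a : Acar) : forall n, ~ In n (suppL a) -> proj1_sig a n = gone G.
Proof. unfold suppL. exact (proj2_sig (constructive_indefinite_description _ (proj2_sig a))). Qed.

Lemma map_eq_in (A B : Type) (f g : A -> B) (L : list A) :
  List.map f L = List.map g L -> forall n, In n L -> f n = g n.
Proof.
  induction L as [|x L IH]; simpl; intros E n Hn; [contradiction|].
  injection E; intros E2 E1. destruct Hn as [<-|Hn]; auto.
Qed.

Lemma A_countable : countable_group G -> countable_group Agroup.
Proof.
  intros [c Hc].
  exists (fun a : Acar => pickle (suppL a, List.map (fun n => c (proj1_sig a n)) (suppL a))).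
  intros a b E. have E' := pcan_inj (@pickleK _) E. injection E'; intros E2 E1.
  apply Aext; intro n. destruct (classic (In n (suppL a))) as [Hi|Hn].
  - apply Hc. rewrite E1 in E2. apply (@map_eq_in _ _ _ _ _ E2 n). rewrite -E1; exact Hi.
  - rewrite !suppL_spec //. rewrite -E1; exact Hn.
Qed.

Lemma fsupp_iota (g : G) : fsupp (fun n => match n with 0 => g | _ => gone G end).
Proof. exists (0 :: nil). intros [|n] Hn; [exfalso; apply Hn; simpl; auto | reflexivity]. Qed.

Definition iota_h : Hom G Agroup.
Proof.
  refine (@MkHom G Agroup (fun g => exist _ _ (fsupp_iota g)) _).
  intros x y; apply Aext; intros [|n]; simpl; [reflexivity | symmetry; apply gmul1l].
Defined.

Definition pi_h : Hom Agroup G := @MkHom Agroup G (fun a => proj1_sig a 0) (fun _ _ => Logic.eq_refl).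

Lemma fsupp_p (S : nat -> bool) a : fsupp a -> fsupp (fun n => if S n then a n else gone G).
Proof. intros [L H]; exists L; intros n Hn; destruct (S n); auto. Qed.

Definition p_h (S : nat -> bool) : Hom Agroup Agroup.
Proof.
  refine (@MkHom Agroup Agroup (fun a => exist _ _ (fsupp_p S (proj2_sig a))) _).
  intros x y; apply Aext; intro n; simpl; destruct (S n); [reflexivity | symmetry; apply gmul1l].
Defined.

Lemma fsupp_j (k : nat) a : fsupp a ->
  fsupp (fun n => if Nat.eqb (fst (of_nat n)) k then a (snd (of_nat n)) else gone G).
Proof.
  intros [L H]; exists (List.map (fun m => to_nat (k, m)) L); intros n Hn.
  destruct (Nat.eqb_spec (fst (of_nat n)) k) as [e|]; [|reflexivity].
  apply H. intro Hin. apply Hn. apply in_map_iff. exists (snd (of_nat n)). split; auto.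
  rewrite -e -surjective_pairing. apply cancel_to_of.
Qed.

Definition j_h (k : nat) : Hom Agroup Agroup.
Proof.
  refine (@MkHom Agroup Agroup (fun a => exist _ _ (fsupp_j k (proj2_sig a))) _).
  intros x y; apply Aext; intro n; simpl.
  destruct (Nat.eqb (fst (of_nat n)) k); [reflexivity | symmetry; apply gmul1l].
Defined.

Lemma fsupp_r (k : nat) a : fsupp a -> fsupp (fun m => a (to_nat (k, m))).
Proof.
  intros [L H]; exists (List.map (fun n => snd (of_nat n)) L); intros m Hm.
  apply H; intro Hin; apply Hm; apply in_map_iff; exists (to_nat (k, m)).
  rewrite cancel_of_to; auto.
Qed.

Definition r_h (k : nat) : Hom Agroup Agroup.
Proof.
  refine (@MkHom Agroup Agroup (fun a => exist _ _ (fsupp_r k (proj2_sig a))) _).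
  intros x y; apply Aext; intro n; reflexivity.
Defined.

End DS.

Definition AC (G : CountGroup) : CountGroup :=
  MkCountGroup (A_countable (cgroup_countable G)).

Definition Sf (f : nat -> bool) : nat -> bool := fun n => f (fst (of_nat n)).

Lemma collapse (F : Functor_count_fg) (G : CountGroup) (f g : nat -> bool) k :
  f k = true -> g k = false ->
  (forall y, Fmor F (AC G) (AC G) (p_h G (Sf f)) y = Fmor F (AC G) (AC G) (p_h G (Sf g)) y) ->
  forall y, Fmor F (AC G) (AC G) (triv (AC G) (AC G)) y = y.
Proof.
  intros fk gk Heq y.
  pose W := fun n => Sf f n && negb (Sf g n).
  have e1 : Fmor F (AC G) (AC G) (r_h G k) (Fmor F (AC G) (AC G) (j_h G k) y) = y.
  { rewrite -Fcomp. apply Fid'. intro a. apply Aext. intro m. cbn -[to_nat of_nat].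
    rewrite cancel_of_to ; cbn -[to_nat of_nat]; rewrite Nat.eqb_refl. reflexivity. }
  have e2 : forall z, Fmor F (AC G) (AC G) (p_h G W) z = Fmor F (AC G) (AC G) (triv (AC G) (AC G)) z.
  { intro z. rewrite (Fcomp' (G := AC G) (H := AC G) (K := AC G) (g := p_h G W) (f := p_h G (Sf f))).
    - rewrite Heq -Fcomp. apply Fext. intro a. apply Aext. intro n. cbn -[to_nat of_nat].
      unfold W. destruct (Sf g n), (Sf f n); reflexivity.
    - intro a. apply Aext. intro n. cbn -[to_nat of_nat]. unfold W. destruct (Sf g n), (Sf f n); reflexivity. }
  have e3 : Fmor F (AC G) (AC G) (j_h G k) y =
            Fmor F (AC G) (AC G) (p_h G W) (Fmor F (AC G) (AC G) (j_h G k) y).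
  { apply Fcomp'. intro a. apply Aext. intro n. cbn -[to_nat of_nat]. unfold W, Sf.
    destruct (Nat.eqb_spec (fst (of_nat n)) k) as [e|]; [|destruct (f _ && _); reflexivity].
    rewrite e fk gk. reflexivity. }
  have e4 : Fmor F (AC G) (AC G) (r_h G k) (Fmor F (AC G) (AC G) (triv (AC G) (AC G))
              (Fmor F (AC G) (AC G) (j_h G k) y)) = Fmor F (AC G) (AC G) (triv (AC G) (AC G)) y.
  { symmetry. rewrite (Fcomp' (G := AC G) (H := AC G) (K := AC G) (g := r_h G k) (f := hom_comp (triv (AC G) (AC G)) (j_h G k))).
    - rewrite Fcomp. reflexivity.
    - intro a. apply Aext. intro n. reflexivity. }
  rewrite -e4 -e2 -e3. exact e1.
Qed.

Lemma no_inj (h : (nat -> bool) -> nat) : ~ (forall f g, h f = h g -> f = g).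
Proof.
  intro Hinj.
  pose gg := fun n => match excluded_middle_informative (exists f, h f = n) with
                      | left H => proj1_sig (constructive_indefinite_description _ H)
                      | right _ => fun _ => false end.
  pose d := fun n => negb (gg n n).
  have Hg : gg (h d) = d.
  { unfold gg. destruct (excluded_middle_informative (exists f, h f = h d)) as [H|H].
    - apply Hinj. exact (proj2_sig (constructive_indefinite_description _ H)).
    - exfalso; apply H; exists d; reflexivity. }
  have E : d (h d) = negb (gg (h d) (h d)) by reflexivity.
  rewrite Hg in E. destruct (d (h d)); discriminate.
Qed.

Section Count.
Variable X : Group.
Variable L : list X.

Fixpoint ev (t : GenTree.tree nat) : X :=
  match t with
  | GenTree.Leaf i => List.nth i L (gone X)
  | GenTree.Node 0 (t1 :: nil) => ginv X (ev t1)
  | GenTree.Node 1 (t1 :: t2 :: nil) => gmul X (ev t1) (ev t2)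
  | _ => gone X
  end.

Lemma ev_surj x : generated X L x -> exists t, ev t = x.
Proof.
  induction 1.
  - destruct (In_nth L x (gone X) H) as [i [_ Hi]]. exists (GenTree.Leaf i); exact Hi.
  - exists (GenTree.Node 5 nil); reflexivity.
  - destruct IHgenerated as [t <-]. exists (GenTree.Node 0 (t :: nil)); reflexivity.
  - destruct IHgenerated1 as [t1 <-], IHgenerated2 as [t2 <-].
    exists (GenTree.Node 1 (t1 :: t2 :: nil)); reflexivity.
Qed.

Lemma list_surj (l : list X) : (forall x, generated X L x) -> exists ts, List.map ev ts = l.
Proof.
  intro Hg. induction l as [|x l IH].
  - exists nil; reflexivity.
  - destruct IH as [ts Hts]. destruct (ev_surj (Hg x)) as [t Ht].
    exists (t :: ts). simpl. rewrite Ht Hts. reflexivity.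
Qed.
End Count.

Lemma key_A (F : Functor_count_fg) (G : CountGroup) :
  forall y, Fmor F (AC G) (AC G) (triv (AC G) (AC G)) y = y.
Proof.
  destruct (classic (exists f g k, f k = true /\ g k = false /\
     forall y, Fmor F (AC G) (AC G) (p_h G (Sf f)) y = Fmor F (AC G) (AC G) (p_h G (Sf g)) y))
    as [[f [g [k [fk [gk Hy]]]]]|N].
  - exact (@collapse F G f g k fk gk Hy).
  - exfalso.
    pose X := Fobj F (AC G).
    destruct (fggroup_fg X) as [L HL].
    pose Phi := fun f => List.map (Fmor F (AC G) (AC G) (p_h G (Sf f))) L.
    pose trees := fun f => proj1_sig (constructive_indefinite_description _ (list_surj (Phi f) HL)).
    apply (no_inj (fun f => pickle (trees f))).
    intros f g E. have E' := pcan_inj (@pickleK _) E.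
    have Ef : List.map (ev X L) (trees f) = Phi f := proj2_sig (constructive_indefinite_description _ (list_surj (Phi f) HL)).
    have Eg : List.map (ev X L) (trees g) = Phi g := proj2_sig (constructive_indefinite_description _ (list_surj (Phi g) HL)).
    rewrite E' Eg in Ef.
    have Hall : forall y, Fmor F (AC G) (AC G) (p_h G (Sf f)) y = Fmor F (AC G) (AC G) (p_h G (Sf g)) y.
    { intro y. apply (@gen_agree _ _ _ _ L); [|apply HL].
      intros s Hs. symmetry. exact (@map_eq_in _ _ _ _ _ Ef s Hs). }
    apply functional_extensionality; intro k.
    destruct (f k) eqn:Hf, (g k) eqn:Hg; try reflexivity; exfalso; apply N.
    + exists f, g, k; auto.
    + exists g, f, k; split; [|split]; auto.
Qed.

Lemma key (F : Functor_count_fg) (G : CountGroup) :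
  forall x, Fmor F G G (triv G G) x = x.
Proof.
  intro x.
  rewrite (Fcomp' (g := pi_h G) (f := hom_comp (triv (AC G) (AC G)) (iota_h G)) (H := AC G)).
  - rewrite Fcomp key_A -Fcomp. apply Fid'. intro g. reflexivity.
  - intro g. reflexivity.
Qed.

Theorem proposition2p9 :
  forall F : Functor_count_fg, exists K : FGGroup, iso_to_constant F K.
Proof.
  intro F. exists (Fobj F TC).
  exists (fun G => Fmor F G TC (triv G TC)). split.
  - intro G. exists (Fmor F TC G (triv TC G)). split.
    + intro x. rewrite -(Fcomp' (h := triv G G)); [apply key | reflexivity].
    + intro y. rewrite -Fcomp. apply Fid'. intro u. destruct u. reflexivity.
  - intros G H f x. symmetry. apply Fcomp'. intro; reflexivity.
Qed.
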